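(* Let $n\ge 1$, let $T$ be a regular tournament on $2n+1$ vertices (every vertex has in-degree and out-degree $n$), and let $G$ be the hairy tournament obtained from $T$ by attaching to each vertex $a$ of $T$ exactly $2n+1$ new vertices, each having exactly one incident edge, directed from $a$ to it. Then $|V(G)|=(2n+2)(2n+1)$ and the minimum size of a quasi-kernel of $G$ is $1+n(2n+1)$.
   Context: Digraphs are finite, without loops and without multiple edges in the same direction. For $V'\subseteq V(G)$, $\Gamma^+(V')$ is the set of out-neighbours of vertices of $V'$ and $\Gamma^+_2(V')=V'\cup\Gamma^+(V')\cup\Gamma^+(\Gamma^+(V'))$. A quasi-kernel is an independent set $Q$ with $\Gamma^+_2(Q)=V(G)$. *)

(* Defs.v *)
From mathcomp Require Import all_boot.
Set Implicit Arguments. Unset Strict Implicit. Unset Printing Implicit Defensive.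

Definition loopless (V : finType) (E : rel V) : Prop := forall x, ~~ E x x.

Definition outN (V : finType) (E : rel V) (S : {set V}) : {set V} :=
  [set y | [exists x in S, E x y]].

Definition outN2 (V : finType) (E : rel V) (S : {set V}) : {set V} :=
  S :|: outN E S :|: outN E (outN E S).

Definition independent (V : finType) (E : rel V) (S : {set V}) : Prop :=
  forall x y, x \in S -> y \in S -> ~~ E x y.

Definition quasi_kernel (V : finType) (E : rel V) (Q : {set V}) : Prop :=
  independent E Q /\ outN2 E Q = [set: V].

Definition tournament (V : finType) (E : rel V) : Prop :=
  loopless E /\ forall x y, x != y -> (E x y (+) E y x).

Definition outdeg (V : finType) (E : rel V) (x : V) : nat := #|[set y | E x y]|.
Definition indeg (V : finType) (E : rel V) (x : V) : nat := #|[set y | E y x]|.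

Definition regular_tournament (n : nat) (V : finType) (E : rel V) : Prop :=
  tournament E /\ #|V| = (2 * n).+1 /\
  forall x, outdeg E x = n /\ indeg E x = n.

(* Hairy digraph: vertices of T plus, for each vertex a, k new vertices
   (a, i), i < k, each with the single arc a -> (a, i). *)
Definition hairy_vertex (V : finType) (k : nat) : finType :=
  (V + (V * 'I_k))%type.

Definition hairy_edge (V : finType) (k : nat) (E : rel V) :
  rel (hairy_vertex V k) :=
  fun u v =>
    match u, v with
    | inl x, inl y => E x y
    | inl x, inr (a, _) => x == a
    | _, _ => false
    end.

(* Main.v *)
Require Import Defs.
From mathcomp Require Import all_boot.
From mathcomp Require Import zify.

Section H.
Variables (V : finType) (k : nat) (E : rel V).
Local Notation HV := (hairy_vertex V k).
Local Notation HE := (hairy_edge E).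

Lemma outNP (S : {set HV}) y :
  reflect (exists2 x, x \in S & HE x y) (y \in outN HE S).
Proof. rewrite inE; exact: exists_inP. Qed.

Lemma leaf_cover (Q : {set HV}) a i :
  inr (a, i) \in outN2 HE Q ->
  [\/ inr (a, i) \in Q, inl a \in Q | exists2 x, inl x \in Q & E x a].
Proof.
rewrite /outN2 !inE => /orP[/orP[H|/exists_inP[w wQ]]|/exists_inP[w /outNP[w' w'Q]]].
- by constructor 1.
- case: w wQ => [x|[]] //= xQ /eqP <-; by constructor 2.
- case: w => [x|[]] //= ew /eqP ex; subst x.
  case: w' w'Q ew => [x|[]] //= xQ exa; constructor 3; by exists x.
Qed.
End H.
Arguments leaf_cover {V k E Q a i}.

Theorem mainTheorem6 (n : nat) (V : finType) (E : rel V) :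
  1 <= n ->
  regular_tournament n E ->
  #|hairy_vertex V (2 * n).+1| = (2 * n + 2) * (2 * n + 1) /\
  (exists Q : {set hairy_vertex V (2 * n).+1},
      quasi_kernel (hairy_edge E) Q /\ #|Q| = 1 + n * (2 * n + 1)) /\
  (forall Q : {set hairy_vertex V (2 * n).+1},
      quasi_kernel (hairy_edge E) Q -> 1 + n * (2 * n + 1) <= #|Q|).
Proof.
move=> n1 [[loopl tour] [cardV deg]].
set k := (2 * n).+1.
have cardH : #|hairy_vertex V k| = (2 * n + 2) * (2 * n + 1).
  rewrite /hairy_vertex card_sum card_prod card_ord cardV /k; lia.
split=> //.
have indegN v : #|[set a | E a v]| = n by case: (deg v).
have outdegN v : #|[set a | E v a]| = n by case: (deg v).
have antisym x y : E x y -> E y x -> False.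
  move=> exy eyx; have xy : x != y.
    by apply/eqP=> exy'; subst y; move: (loopl x); rewrite exy.
  by move: (tour x y xy); rewrite exy eyx.
split.
  have : 0 < #|V| by rewrite cardV.
  case/card_gt0P => v _.
  pose L := [set inr p | p in setX [set a | E a v] [set: 'I_k]] : {set hairy_vertex V k}.
  exists (inl v |: L); split; last first.
    rewrite cardsU1 card_imset; last exact: inr_inj.
    rewrite cardsX indegN cardsT card_ord.
    have -> : inl v \notin L by apply/imsetP => -[].
    rewrite /k; lia.
  split.
    move=> x y; rewrite !inE => /orP[/eqP->|/imsetP[p _ ->]] /orP[/eqP->|/imsetP[q qin ->]] //=.
    case: q qin => a i; rewrite in_setX inE => /andP[eav _] /=.
    by apply/negP => /eqP va; subst a; move: (loopl v); rewrite eav.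
  have vQ : inl v \in (inl v |: L) by rewrite !inE eqxx.
  apply/setP => u; rewrite /outN2 !inE.
  case: u => [x|[a i]].
  - case: (eqVneq x v) => [->|xv]; first by rewrite eqxx.
    have := tour x v xv; case exv: (E x v); case evx: (E v x) => //= _.
      have [y evy eyx] : exists2 y, E v y & E y x.
        apply/exists_inP; apply: contraT; rewrite negb_exists_in => /forall_inP H.
        have sub : v |: [set a | E v a] \subset [set a | E x a].
          apply/subsetP => z; rewrite !inE => /orP[/eqP->//|evz].
          have zx : z != x by apply/eqP => zx; subst z; rewrite evz in evx.
          have := tour z x zx; have := H z evz; case: (E z x) => //= _.
        have := subset_leq_card sub; rewrite cardsU1 !outdegN.
        have -> : v \notin [set a | E v a] by rewrite inE loopl.
        by rewrite /=; lia.
      apply/orP; right; apply/existsP; exists (inl y); rewrite /= eyx andbT.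
      by apply/outNP; exists (inl v).
    by apply/orP; left; apply/orP; right; apply/exists_inP; exists (inl v).
  - case: (eqVneq a v) => [->|av].
      by apply/orP; left; apply/orP; right; apply/exists_inP; exists (inl v) => //=.
    have := tour a v av; case eav: (E a v); case eva: (E v a) => //= _.
      apply/orP; left; apply/orP; left; apply/imsetP.
      by exists (a, i) => //; rewrite in_setX !inE eav.
    apply/orP; right; apply/exists_inP; exists (inl a) => //=.
    by apply/outNP; exists (inl v).
move=> Q [ind cov].
have uniq x y : inl x \in Q -> inl y \in Q -> x = y.
  move=> xQ yQ; apply/eqP; apply: contraT => xy.
  have := tour x y xy; have := ind _ _ xQ yQ; have := ind _ _ yQ xQ.
  by rewrite /= => /negbTE -> /negbTE ->.
have leafQ a i : inr (a, i) \in outN2 (hairy_edge E) Q by rewrite cov inE.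
case: (pickP (fun x => inl x \in Q)) => [v vQ|noV].
  pose L := [set inr p | p in setX [set a | E a v] [set: 'I_k]] : {set hairy_vertex V k}.
  have sub : inl v |: L \subset Q.
    apply/subsetP => u; rewrite !inE => /orP[/eqP->//|/imsetP[[a i] + ->]].
    rewrite in_setX inE => /andP[eav _].
    case: (leaf_cover (leafQ a i)) => // [aQ|[x xQ exa]].
      by move: (ind _ _ aQ vQ); rewrite /= eav.
    by move: (uniq _ _ xQ vQ) exa => -> eva; case: (antisym _ _ eav eva).
  have := subset_leq_card sub; rewrite cardsU1 card_imset; last exact: inr_inj.
  rewrite cardsX indegN cardsT card_ord.
  have -> : inl v \notin L by apply/imsetP => -[].
  by rewrite /k => H; apply: leq_trans H; lia.
pose L := [set inr p | p : V * 'I_k] : {set hairy_vertex V k}.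
have sub : L \subset Q.
  apply/subsetP => u /imsetP[[a i] _ ->].
  case: (leaf_cover (leafQ a i)) => // [aQ|[x xQ exa]].
    by move: (noV a); rewrite aQ.
  by move: (noV x); rewrite xQ.
have := subset_leq_card sub; rewrite card_imset; last exact: inr_inj.
rewrite card_prod card_ord cardV /k => H; apply: leq_trans H; nia.
Qed.
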